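(* Let $\mathcal{M}_i=(E_i,\rho_i)$, $i=1,2$, be $q$-matroids, let $\mathcal{F}_i$ and $\mathcal{Z}_i$ be the collections of flats and of cyclic flats of $\mathcal{M}_i$, and let $\rho$ be the rank function of $\mathcal{M}_1\oplus\mathcal{M}_2$ on $E=E_1\oplus E_2$. Then for all subspaces $V\le E$, \[ \rho(V)=\dim V+\min_{F_1\in\mathcal{F}_1,F_2\in\mathcal{F}_2}\big(\rho_1(F_1)+\rho_2(F_2)-\dim((F_1\oplus F_2)\cap V)\big) =\dim V+\min_{Z_1\in\mathcal{Z}_1,Z_2\in\mathcal{Z}_2}\big(\rho_1(Z_1)+\rho_2(Z_2)-\dim((Z_1\oplus Z_2)\cap V)\big). \]
   Context: Let $\mathbb{F}=\mathbb{F}_q$. A $q$-matroid is $\mathcal{M}=(E,\rho)$, $E$ a finite-dimensional $\mathbb{F}$-vector space, $\rho$ from subspaces to $\mathbb{Z}_{\ge0}$ with $0\le\rho(V)\le\dim V$, monotone and submodular. A flat is $F$ with $\rho(F+\langle x\rangle)>\rho(F)$ for all $x\notin F$. The cyclic core is $\mathrm{cyc}(V)=\{x\in V\mid\rho(W)=\rho(V)\text{ for all }W\le V\text{ with }W+\langle x\rangle=V\}$; $V$ is cyclic if $\mathrm{cyc}(V)=V$; a cyclic flat is a flat that is cyclic. Direct sum: for $E=E_1\oplus E_2$ (each $E_i$ identified with its image) with projections $\pi_i:E\to E_i$, $\mathcal{M}_1\oplus\mathcal{M}_2=(E,\rho)$ where $\rho(V)=\dim V+\min_{X\le V}(\rho_1(\pi_1(X))+\rho_2(\pi_2(X))-\dim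 X)$. *)

(* Defs.v *)
From HB Require Import structures.
From mathcomp Require Import all_boot all_order all_algebra all_field.
Set Implicit Arguments. Unset Strict Implicit. Unset Printing Implicit Defensive.
Import Order.TTheory GRing.Theory Num.Theory.
Local Open Scope ring_scope.

Section QMatroid.
Variable F : finFieldType.

(* The (finite) list of all subspaces of vT: every subspace is spanned by
   a (\dim vT)-tuple of vectors, and vT is finite since F is. *)
Definition all_subspaces (vT : vectType F) : seq {vspace vT} :=
  [seq (<<(tval s : seq vT)>>)%VS | s : (\dim {: vT}%VS).-tuple (finvect_type vT)].

Definition min_over (T : Type) (s : seq T) (f : T -> int) : int :=
  let vs := map f s in foldr Order.min (head 0 vs) vs.

Definition is_qmatroid (vT : vectType F) (rho : {vspace vT} -> nat) : Prop :=
  [/\ forall V, (rho V <= \dim V)%N,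
      forall V W, (V <= W)%VS -> (rho V <= rho W)%N
    & forall V W, (rho (V + W)%VS + rho (V :&: W)%VS <= rho V + rho W)%N].

(* Flats: rho(X + <x>) > rho(X) for every vector x outside X
   (vT is finite, so this quantifier is decidable). *)
Definition is_flat (vT : vectType F) (rho : {vspace vT} -> nat) (X : {vspace vT}) : bool :=
  [forall x : finvect_type vT, (x \notin X) ==> (rho X < rho (X + <[x : vT]>)%VS)%N].

Definition in_cyc (vT : vectType F) (rho : {vspace vT} -> nat) (V : {vspace vT}) (x : vT) : bool :=
  (x \in V) && all (fun W => ((W <= V)%VS && (W + <[x]> == V)%VS) ==> (rho W == rho V))
                    (all_subspaces vT).

Definition is_cyclic (vT : vectType F) (rho : {vspace vT} -> nat) (V : {vspace vT}) : bool :=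
  [forall x : finvect_type vT, (x \in V) == in_cyc rho V x].

Definition is_cyclic_flat (vT : vectType F) (rho : {vspace vT} -> nat) (X : {vspace vT}) : bool :=
  is_flat rho X && is_cyclic rho X.

(* Direct sum E = E1 (+) E2, realised as the product vector space. *)
Variables (E1 E2 : vectType F).
Definition pi1 : 'Hom((E1 * E2)%type, E1) := linfun (fun x : E1 * E2 => x.1).
Definition pi2 : 'Hom((E1 * E2)%type, E2) := linfun (fun x : E1 * E2 => x.2).
Definition inj1 : 'Hom(E1, (E1 * E2)%type) := linfun (fun x : E1 => (x, 0) : E1 * E2).
Definition inj2 : 'Hom(E2, (E1 * E2)%type) := linfun (fun y : E2 => (0, y) : E1 * E2).

Definition dsum_sub (X1 : {vspace E1}) (X2 : {vspace E2}) : {vspace (E1 * E2)%type} :=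
  (inj1 @: X1 + inj2 @: X2)%VS.

Definition dsum_rank (rho1 : {vspace E1} -> nat) (rho2 : {vspace E2} -> nat)
  (V : {vspace (E1 * E2)%type}) : int :=
  (\dim V)%:Z + min_over [seq X <- all_subspaces (E1 * E2)%type | (X <= V)%VS]
    (fun X => (rho1 (pi1 @: X)%VS)%:Z + (rho2 (pi2 @: X)%VS)%:Z - (\dim X)%:Z).

End QMatroid.

(* Main.v *)
Require Import Defs.
From HB Require Import structures.
From mathcomp Require Import all_boot all_order all_algebra all_field zify.
Import Order.TTheory GRing.Theory Num.Theory.
Local Open Scope ring_scope.
Set Implicit Arguments. Unset Strict Implicit. Unset Printing Implicit Defensive.
Section Lin.
Variables (F : finFieldType) (E1 E2 : vectType F).
Definition inj1f (x : E1) : (E1 * E2)%type := (x, 0).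
Lemma inj1f_lin : linear inj1f.
Proof. move=> a u v; rewrite /inj1f; apply/eqP; rewrite xpair_eqE /=. by rewrite scaler0 addr0 !eqxx. Qed.
HB.instance Definition _ := GRing.isLinear.Build F E1 (E1 * E2)%type _ inj1f inj1f_lin.
Definition inj2f (x : E2) : (E1 * E2)%type := (0, x).
Lemma inj2f_lin : linear inj2f.
Proof. move=> a u v; rewrite /inj2f; apply/eqP; rewrite xpair_eqE /=. by rewrite scaler0 addr0 !eqxx. Qed.
HB.instance Definition _ := GRing.isLinear.Build F E2 (E1 * E2)%type _ inj2f inj2f_lin.
Definition pi1f (x : (E1 * E2)%type) : E1 := x.1.
Lemma pi1f_lin : linear pi1f.
Proof. by []. Qed.
HB.instance Definition _ := GRing.isLinear.Build F (E1 * E2)%type E1 _ pi1f pi1f_lin.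
Definition pi2f (x : (E1 * E2)%type) : E2 := x.2.
Lemma pi2f_lin : linear pi2f.
Proof. by []. Qed.
HB.instance Definition _ := GRing.isLinear.Build F (E1 * E2)%type E2 _ pi2f pi2f_lin.
Lemma inj1E x : inj1 E1 E2 x = (x, 0) :> (E1 * E2)%type.
Proof. exact: (lfunE inj1f x). Qed.
Lemma inj2E x : inj2 E1 E2 x = (0, x) :> (E1 * E2)%type.
Proof. exact: (lfunE inj2f x). Qed.
Lemma pi1E (x : (E1 * E2)%type) : pi1 E1 E2 x = x.1.
Proof. exact: (lfunE pi1f x). Qed.
Lemma pi2E (x : (E1 * E2)%type) : pi2 E1 E2 x = x.2.
Proof. exact: (lfunE pi2f x). Qed.
End Lin.

Section Vec.
Variables (F : finFieldType) (E1 E2 : vectType F).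

Lemma dim_cap_mono (vT : vectType F) (S S' V : {vspace vT}) :
  (S <= S')%VS -> (\dim (S :&: V) <= \dim (S' :&: V))%N.
Proof. by move=> h; apply: dimvS; apply: capvS. Qed.

Lemma dim_cap_line (vT : vectType F) (S V : {vspace vT}) (y : vT) :
  (\dim ((S + <[y]>) :&: V) <= \dim (S :&: V) + 1)%N.
Proof.
set T := ((S + <[y]>) :&: V)%VS.
have e : (S :&: T)%VS = (S :&: V)%VS.
  apply/eqP; rewrite eqEsubv; apply/andP; split.
    by apply: capvS => //; apply: capvSr.
  rewrite subv_cap capvSl /= /T subv_cap capvSr andbT.
  by apply: (subv_trans (capvSl _ _)); apply: addvSl.
have h1 := dimv_sum_cap S T.
have h2 : (\dim (S + T) <= \dim (S + <[y]>))%N.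
  by apply: dimvS; rewrite subv_add addvSl capvSl.
have h3 := (dimv_add_leqif S <[y]>).1.
have h4 : (\dim <[y]> <= 1)%N by rewrite dim_vline leq_b1.
rewrite e in h1. lia.
Qed.

Lemma dsum_addl (A1 : {vspace E1}) (A2 : {vspace E2}) x :
  dsum_sub (A1 + <[x]>) A2 = (dsum_sub A1 A2 + <[inj1 E1 E2 x]>)%VS.
Proof. by rewrite /dsum_sub limgD limg_line -!addvA (addvC <[_]>%VS). Qed.

Lemma dsum_addr (A1 : {vspace E1}) (A2 : {vspace E2}) x :
  dsum_sub A1 (A2 + <[x]>) = (dsum_sub A1 A2 + <[inj2 E1 E2 x]>)%VS.
Proof. by rewrite /dsum_sub limgD limg_line addvA. Qed.

Lemma dsum_mem (A1 : {vspace E1}) (A2 : {vspace E2}) z :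
  z \in dsum_sub A1 A2 -> (z.1 \in A1) && (z.2 \in A2).
Proof.
case/memv_addP => u /memv_imgP [a ha ->] [v /memv_imgP [b hb ->] ->].

by rewrite inj1E inj2E /= addr0 add0r ha hb.
Qed.

Lemma pi1_dsum (A1 : {vspace E1}) (A2 : {vspace E2}) :
  (pi1 E1 E2 @: dsum_sub A1 A2 <= A1)%VS.
Proof.
apply/subvP => y /memv_imgP [z /dsum_mem /andP [h _] ->].
by rewrite ?pi1E ?pi2E.
Qed.

Lemma pi2_dsum (A1 : {vspace E1}) (A2 : {vspace E2}) :
  (pi2 E1 E2 @: dsum_sub A1 A2 <= A2)%VS.
Proof.
apply/subvP => y /memv_imgP [z /dsum_mem /andP [_ h] ->].
by rewrite ?pi1E ?pi2E.
Qed.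

Lemma sub_dsum_proj (X : {vspace (E1 * E2)%type}) :
  (X <= dsum_sub (pi1 E1 E2 @: X) (pi2 E1 E2 @: X))%VS.
Proof.
apply/subvP => z hz.
have -> : z = inj1 E1 E2 (pi1 E1 E2 z) + inj2 E1 E2 (pi2 E1 E2 z).
  by case: z {hz} => a b; rewrite inj1E inj2E pi1E pi2E /=; apply/eqP; rewrite xpair_eqE /= addr0 add0r !eqxx.
by apply: memv_add; apply: memv_img; apply: memv_img.
Qed.

End Vec.

Section Exist.
Variables (F : finFieldType) (E1 E2 : vectType F).
Variables (rho1 : {vspace E1} -> nat) (rho2 : {vspace E2} -> nat).
Hypothesis mono1 : forall V W, (V <= W)%VS -> (rho1 V <= rho1 W)%N.
Hypothesis mono2 : forall V W, (V <= W)%VS -> (rho2 V <= rho2 W)%N.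
Variable V : {vspace (E1 * E2)%type}.

Definition gg (A1 : {vspace E1}) (A2 : {vspace E2}) : int :=
  (rho1 A1)%:Z + (rho2 A2)%:Z - (\dim (dsum_sub A1 A2 :&: V))%:Z.

Definition DD := (\dim (fullv : {vspace E1}) + \dim (fullv : {vspace E2}))%N.

Definition mu (A1 : {vspace E1}) (A2 : {vspace E2}) : nat :=
  (2 * (rho1 A1 + rho2 A2) + (DD - (\dim A1 + \dim A2)))%N.

Lemma not_flat (vT : vectType F) (rho : {vspace vT} -> nat) (A : {vspace vT}) :
  ~~ is_flat rho A ->
  exists x : vT, (x \notin A) && (rho (A + <[x]>)%VS <= rho A)%N.
Proof.
move=> /forallPn [x]; rewrite negb_imply -leqNgt => hx; by exists x.
Qed.

Lemma not_cyclic (vT : vectType F) (rho : {vspace vT} -> nat) (A : {vspace vT}) :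
  ~~ is_cyclic rho A ->
  exists x : vT, exists W : {vspace vT},
    [/\ (W <= A)%VS, (W + <[x]>)%VS = A & rho W != rho A].
Proof.
move=> /forallPn [x]; rewrite /in_cyc.
case: (boolP (x \in A)) => hxA /=; last by [].
case: (boolP (all _ _)) => [_|/allPn [W _]] //; rewrite negb_imply => /andP [/andP [hWA /eqP hWx] hne].
by exists x, W.
Qed.

Lemma dim_lt_add (vT : vectType F) (A : {vspace vT}) (x : vT) :
  x \notin A -> (\dim A < \dim (A + <[x]>))%N.
Proof.
move=> hx; rewrite (ltn_leqif (dimv_leqif_sup (addvSl A <[x]>))).
apply/negP => h; apply/negP: hx; rewrite negbK.
by apply: (subvP h); apply: (subvP (addvSr A <[x]>)); exact: memv_line.
Qed.

Lemma dim_le_full (vT : vectType F) (A : {vspace vT}) : (\dim A <= \dim (fullv : {vspace vT}))%N.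
Proof. exact: dimvS (subvf A). Qed.

Lemma dim_hyp (vT : vectType F) (W : {vspace vT}) x :
  (\dim (W + <[x]>) <= \dim W + 1)%N.
Proof.
have h3 := (dimv_add_leqif W <[x]>).1.
have h4 : (\dim <[x]> <= 1)%N by rewrite dim_vline leq_b1.
lia.
Qed.

Lemma step A1 A2 :
  (is_cyclic_flat rho1 A1 && is_cyclic_flat rho2 A2) \/
  exists B1, exists B2, (mu B1 B2 < mu A1 A2)%N /\ gg B1 B2 <= gg A1 A2.
Proof.
have hA1 := dim_le_full A1; have hA2 := dim_le_full A2.
case f1: (is_flat rho1 A1); last first.
  right; have [x /andP [hx hr]] := not_flat (negbT f1).
  exists (A1 + <[x]>)%VS, A2; split.
    rewrite /mu /DD; have := dim_lt_add hx; have := dim_le_full (A1 + <[x]>). lia.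
  rewrite /gg; have : (dsum_sub A1 A2 <= dsum_sub (A1 + <[x]>) A2)%VS.
    by rewrite dsum_addl addvSl.
  move/(dim_cap_mono V) => hd. lia.
case f2: (is_flat rho2 A2); last first.
  right; have [x /andP [hx hr]] := not_flat (negbT f2).
  exists A1, (A2 + <[x]>)%VS; split.
    rewrite /mu /DD; have := dim_lt_add hx; have := dim_le_full (A2 + <[x]>). lia.
  rewrite /gg; have : (dsum_sub A1 A2 <= dsum_sub A1 (A2 + <[x]>))%VS.
    by rewrite dsum_addr addvSl.
  move/(dim_cap_mono V) => hd. lia.
case c1: (is_cyclic rho1 A1); last first.
  right; have [x [W [hWA hWx hne]]] := not_cyclic (negbT c1).
  have hlt : (rho1 W < rho1 A1)%N by rewrite ltn_neqAle hne mono1.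
  have hd := dim_hyp W x; rewrite hWx in hd.
  have hc := dim_cap_line (dsum_sub W A2) V (inj1 E1 E2 x).
  rewrite -dsum_addl hWx in hc.
  exists W, A2; split; rewrite /mu /gg /DD; lia.
case c2: (is_cyclic rho2 A2); last first.
  right; have [x [W [hWA hWx hne]]] := not_cyclic (negbT c2).
  have hlt : (rho2 W < rho2 A2)%N by rewrite ltn_neqAle hne mono2.
  have hd := dim_hyp W x; rewrite hWx in hd.
  have hc := dim_cap_line (dsum_sub A1 W) V (inj2 E1 E2 x).
  rewrite -dsum_addr hWx in hc.
  exists A1, W; split; rewrite /mu /gg /DD; lia.
by left; rewrite /is_cyclic_flat f1 f2 c1 c2.
Qed.

Lemma exists_cf_pair n : forall A1 A2, (mu A1 A2 <= n)%N ->
  exists Z1, exists Z2,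
    [/\ is_cyclic_flat rho1 Z1, is_cyclic_flat rho2 Z2 & gg Z1 Z2 <= gg A1 A2].
Proof.
elim: n => [|n IH] A1 A2 hmu; case: (step A1 A2) => [/andP [h1 h2]|[B1 [B2 [hm hg]]]].
- by exists A1, A2; split.
- by move: hmu hm; rewrite leqn0 => /eqP ->.
- by exists A1, A2; split.
- have [Z1 [Z2 [z1 z2 hz]]] := IH B1 B2 (leq_trans hm hmu).
  by exists Z1, Z2; split => //; apply: le_trans hz hg.
Qed.

End Exist.
Lemma foldr_min_le (a : int) (l : seq int) y :
  y \in a :: l -> foldr Order.min a l <= y.
Proof.
elim: l y => [|b l IH] y /=; first by rewrite inE => /eqP ->.
rewrite !inE => /or3P [/eqP ->|/eqP ->|hy].
- by rewrite ge_min IH ?orbT // mem_head.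
- by rewrite ge_min lexx.
- by rewrite ge_min IH ?orbT // inE hy orbT.
Qed.

Lemma foldr_min_in (a : int) (l : seq int) : foldr Order.min a l \in a :: l.
Proof.
elim: l => [|b l IH] /=; first by rewrite mem_head.
rewrite minEle; case: ifP => _; first by rewrite !inE eqxx orbT.
move: IH; rewrite !inE => /orP [->|->]; by rewrite ?orbT.
Qed.

Lemma min_over_le (T : eqType) (s : seq T) (f : T -> int) x :
  x \in s -> min_over s f <= f x.
Proof.
move=> hx; rewrite /min_over; apply: foldr_min_le.
by rewrite inE (map_f f hx) orbT.
Qed.

Lemma min_over_mem (T : eqType) (s : seq T) (f : T -> int) :
  s != [::] -> exists2 x, x \in s & min_over s f = f x.
Proof.
case: s => [//|a s] _.
have := foldr_min_in (f a) (f a :: [seq f i | i <- s]); rewrite /min_over /=.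
rewrite !inE => /or3P [/eqP ->|/eqP ->|]; try by exists a; rewrite ?mem_head.
move=> /mapP [x hx ->]; by exists x; rewrite // inE hx orbT.
Qed.
Lemma mem_all_subspaces (F : finFieldType) (vT : vectType F) (U : {vspace vT}) :
  U \in all_subspaces vT.
Proof.
rewrite /all_subspaces.
set n := (\dim {: vT})%VS.
pose s : seq (finvect_type vT) := (vbasis U : seq vT) ++ nseq (n - \dim U) 0.
have hs : size s == n.
  by rewrite size_cat size_tuple size_nseq subnKC // dimvS // subvf.
apply/mapP; exists (Tuple hs); first by rewrite mem_enum.
rewrite /= span_cat (span_basis (vbasisP U)).
have -> : <<nseq (n - \dim U) (0%R:vT)>>%VS = 0%VS.
  apply/eqP; rewrite -subv0; apply/span_subvP => x /nseqP [-> _]; exact: mem0v.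
by rewrite addv0.
Qed.

Lemma key (F : finFieldType) (E1 E2 : vectType F)
  (rho1 : {vspace E1} -> nat) (rho2 : {vspace E2} -> nat)
  (mono1 : forall V W, (V <= W)%VS -> (rho1 V <= rho1 W)%N)
  (mono2 : forall V W, (V <= W)%VS -> (rho2 V <= rho2 W)%N)
  (V : {vspace (E1 * E2)%type}) (L : seq ({vspace E1} * {vspace E2})) :
  (forall Z1 Z2, is_cyclic_flat rho1 Z1 -> is_cyclic_flat rho2 Z2 -> (Z1, Z2) \in L) ->
  min_over [seq X <- all_subspaces (E1 * E2)%type | (X <= V)%VS]
    (fun X => (rho1 (pi1 E1 E2 @: X)%VS)%:Z + (rho2 (pi2 E1 E2 @: X)%VS)%:Z - (\dim X)%:Z)
  = min_over L
      (fun p => (rho1 p.1)%:Z + (rho2 p.2)%:Z - (\dim (dsum_sub p.1 p.2 :&: V))%:Z).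
Proof.
move=> hL.
set Xs := [seq X <- _ | _].
have [Z01 [Z02 [z01 z02 _]]] := exists_cf_pair mono1 mono2 V (leqnn (mu rho1 rho2 0%VS 0%VS)).
apply/le_anti/andP; split.
- have [[A1 A2] hp ->] : exists2 p, p \in L & min_over L
      (fun p => (rho1 p.1)%:Z + (rho2 p.2)%:Z - (\dim (dsum_sub p.1 p.2 :&: V))%:Z)
      = (rho1 p.1)%:Z + (rho2 p.2)%:Z - (\dim (dsum_sub p.1 p.2 :&: V))%:Z.
    apply: min_over_mem; apply/eqP => hE; move: (hL _ _ z01 z02); by rewrite hE.
  set X := (dsum_sub A1 A2 :&: V)%VS.
  have hX : X \in Xs by rewrite mem_filter capvSr mem_all_subspaces.
  apply: le_trans (min_over_le _ hX) _ => /=.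
  have h1 : (rho1 (pi1 E1 E2 @: X)%VS <= rho1 A1)%N.
    apply: mono1; apply: subv_trans (pi1_dsum A1 A2); apply: limgS; exact: capvSl.
  have h2 : (rho2 (pi2 E1 E2 @: X)%VS <= rho2 A2)%N.
    apply: mono2; apply: subv_trans (pi2_dsum A1 A2); apply: limgS; exact: capvSl.
  lia.
- have [X hX ->] : exists2 X, X \in Xs & min_over Xs
      (fun X => (rho1 (pi1 E1 E2 @: X)%VS)%:Z + (rho2 (pi2 E1 E2 @: X)%VS)%:Z - (\dim X)%:Z)
      = (rho1 (pi1 E1 E2 @: X)%VS)%:Z + (rho2 (pi2 E1 E2 @: X)%VS)%:Z - (\dim X)%:Z.
    apply: min_over_mem; apply/eqP => hE.
    have : V \in Xs by rewrite mem_filter subvv mem_all_subspaces.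
    by rewrite hE.
  move: hX; rewrite mem_filter => /andP [hXV _].
  have [Z1 [Z2 [z1 z2 hz]]] := exists_cf_pair mono1 mono2 V
     (leqnn (mu rho1 rho2 (pi1 E1 E2 @: X)%VS (pi2 E1 E2 @: X)%VS)).
  apply: le_trans (min_over_le _ (hL _ _ z1 z2)) _ => /=.
  apply: le_trans hz _; rewrite /gg.
  have : (\dim X <= \dim (dsum_sub (pi1 E1 E2 @: X)%VS (pi2 E1 E2 @: X)%VS :&: V)%VS)%N.
    by apply: dimvS; rewrite subv_cap sub_dsum_proj hXV.
  lia.
Qed.

Theorem theorem5p8 (F : finFieldType) (E1 E2 : vectType F)
  (rho1 : {vspace E1} -> nat) (rho2 : {vspace E2} -> nat) :
  is_qmatroid rho1 -> is_qmatroid rho2 ->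
  forall V : {vspace (E1 * E2)%type},
    dsum_rank rho1 rho2 V =
      (\dim V)%:Z + min_over
        [seq (X1, X2) | X1 <- [seq X <- all_subspaces E1 | is_flat rho1 X],
                        X2 <- [seq X <- all_subspaces E2 | is_flat rho2 X]]
        (fun p => (rho1 p.1)%:Z + (rho2 p.2)%:Z - (\dim (dsum_sub p.1 p.2 :&: V))%:Z)
    /\
    dsum_rank rho1 rho2 V =
      (\dim V)%:Z + min_over
        [seq (Z1, Z2) | Z1 <- [seq X <- all_subspaces E1 | is_cyclic_flat rho1 X],
                        Z2 <- [seq X <- all_subspaces E2 | is_cyclic_flat rho2 X]]
        (fun p => (rho1 p.1)%:Z + (rho2 p.2)%:Z - (\dim (dsum_sub p.1 p.2 :&: V))%:Z).
Proof.
move=> [_ mono1 _] [_ mono2 _] V.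
split; rewrite /dsum_rank; congr (_ + _); apply: key => // Z1 Z2 z1 z2;
  apply: (allpairs_f (fun a b => (a, b))); rewrite mem_filter mem_all_subspaces andbT //.
- by case/andP: z1.
- by case/andP: z2.
Qed.
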